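(* In the curved-exam game described in the context, let $x^*=(x_1^*,\dots,x_n^* )$ be a pure Nash equilibrium in which there is a curve ($\bar x^*:=\frac1n\sum_j x_j^*<m$) and every student exerts positive effort ($x_i^*>0$ for all $i$). Define $$\hat\alpha_n:=n\Big(1-\Big(\sum_{i=1}^n\frac{1}{n-\alpha_i}\Big)^{-1}\Big)=n-\mathrm{HarmonicMean}(n-\alpha_1,\dots,n-\alpha_n).$$ Then $\min_i\alpha_i\le\hat\alpha_n\le\max_i\alpha_i$, $$\bar x^*=1-\frac{nm}{n-1}\Big(\frac1{\hat\alpha_n}-1\Big),\qquad\text{and}\qquad x_i^*=\frac{(n-1)\alpha_i-n(1-\alpha_i)(m-\bar x^* )}{n-\alpha_i}\ \text{ for each } i.$$
   Context: The curved-exam game: fix $n\ge2$, abilities $\alpha_1,\dots,\alpha_n\in(0,1)$, target mean $m\in(0,1)$. Student $i$ chooses $x_i\in[0,1]$; $\bar x=\frac1n\sum_j x_j$, $\bar x_{-i}=\frac1{n-1}\sum_{j\ne i}x_j$. Grade $G_i(x)=x_i+\max(m-\bar x,0)=\max\big(m+\frac{n-1}{n}(x_i-\bar x_{-i}),x_i\big)$ (not truncated at 1); payoff $U_i(x)=G_i(x)^{\alpha_i}(1-x_i)^{1-\alpha_i}$. A pure Nash equilibrium is a profile where each $x_i$ maximizes $U_i(\cdot,x_{-i})$ over $[0,1]$. *)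

(* Defs.v *)
From HB Require Import structures.
From mathcomp Require Import all_boot all_order all_algebra.
From mathcomp Require Import all_classical all_reals all_analysis.
Set Implicit Arguments. Unset Strict Implicit. Unset Printing Implicit Defensive.
Import Order.TTheory GRing.Theory Num.Theory.
Local Open Scope ring_scope.

Section CurvedExam.
Variables (R : realType) (n : nat).

Definition xbar (x : 'I_n -> R) : R := (\sum_(j < n) x j) / n%:R.

(* grade  G_i(x) = x_i + max(m - xbar, 0)  (not truncated at 1) *)
Definition grade (m : R) (x : 'I_n -> R) (i : 'I_n) : R :=
  x i + Num.max (m - xbar x) 0.

(* payoff  U_i(x) = G_i(x)^alpha_i * (1 - x_i)^(1 - alpha_i)  (powR: 0 `^ a = 0 for a <> 0) *)
Definition payoff (alpha : 'I_n -> R) (m : R) (x : 'I_n -> R) (i : 'I_n) : R :=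
  (grade m x i) `^ (alpha i) * (1 - x i) `^ (1 - alpha i).

Definition deviate (x : 'I_n -> R) (i : 'I_n) (y : R) : 'I_n -> R :=
  fun j => if j == i then y else x j.

Definition pure_nash (alpha : 'I_n -> R) (m : R) (x : 'I_n -> R) : Prop :=
  forall i : 'I_n, 0 <= x i <= 1 /\
    forall y : R, 0 <= y <= 1 -> payoff alpha m (deviate x i y) i <= payoff alpha m x i.

Definition alpha_hat (alpha : 'I_n -> R) : R :=
  n%:R * (1 - (\sum_(i < n) (n%:R - alpha i)^-1)^-1).

End CurvedExam.

(* Main.v *)
Require Import Defs.
From HB Require Import structures.
From mathcomp Require Import all_boot all_order all_algebra.
From mathcomp Require Import all_classical all_reals all_analysis.
From mathcomp Require Import ring lra.
Import Order.TTheory GRing.Theory Num.Theory.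
Local Open Scope ring_scope.

Lemma aff (R : realType) (a c t : R) : is_derive t 1 (fun y : R => a * y + c) a.
Proof.
have := @is_deriveD R R R (fun y => a * y) (cst c) t 1 (a*1) 0.
rewrite mulr1 addr0 => H; apply: H.
 have := @is_deriveZ R R R id a t 1 1 (is_derive_id _ _).
 by rewrite /GRing.scale/= mulr1.
Qed.

Lemma foc (R : realType) (al a c lo hi x : R) :
  0 < al < 1 -> lo < x < hi -> (forall t, lo < t < hi -> 0 < a * t + c /\ t < 1) ->
  (forall t, lo < t < hi -> (a*t+c) `^ al * (1 - t) `^ (1 - al) <= (a*x+c) `^ al * (1 - x) `^ (1 - al)) ->
  al * a * (1 - x) = (1 - al) * (a * x + c).
Proof.
move=> /andP[al0 al1] /andP[lx xh] pos le.
pose f := (al \*: (@ln R \o (fun y : R => a*y+c))) + ((1-al) \*: (@ln R \o (fun y : R => (-1)*y+1))).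
have D t : lo < t < hi -> is_derive t 1 f (al * ((a*t+c)^-1 * a) + (1-al) * ((-1*t+1)^-1 * (-1))).
  move=> /pos [p1 p2].
  by apply: is_deriveD; apply: is_deriveZ; apply: is_derive1_comp; try exact: aff;
    apply: is_derive1_ln; lra.
have fE t : lo < t < hi -> (a*t+c) `^ al * (1 - t) `^ (1 - al) = expR (f t).
  move=> /pos [p1 p2].
  rewrite /f /= /powR gt_eqF // gt_eqF ?subr_gt0 // -expRD.
  by congr expR; rewrite !fctE /GRing.scale /= mulN1r [-t+1]addrC.
have Hm := (@derive1_at_max R f lo hi x (ltW (lt_trans lx xh))).
have xin : lo < x < hi by rewrite lx xh.
have := Hm _ _ _.
case => [t|||].
- by rewrite in_itv /= => /D [].
- by rewrite in_itv /= lx xh.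
- move=> t; rewrite in_itv /= => ht; rewrite -ler_expR -fE // -fE //; exact: le.
move=> _ H0; have [_ H1] := D x xin; rewrite H0 in H1.
have [p1 p2] := pos x xin.
have ne1 : a*x+c != 0 by rewrite gt_eqF.
have ne2 : -1*x+1 != 0 by rewrite gt_eqF //; lra.
have := congr1 (fun z => z * ((a*x+c)*(-1*x+1))) H1; rewrite mul0r => E.
have E2 : (al * ((a * x + c)^-1 * a) + (1 - al) * ((-1 * x + 1)^-1 * -1)) * ((a*x+c)*(-1*x+1))
   = al*a*(1-x) - (1-al)*(a*x+c) by field; rewrite ne1 ne2.
rewrite E2 in E; lra.
Qed.

Lemma sum_dev (R : realType) n (x : 'I_n -> R) i y :
  \sum_(j < n) deviate x i y j = \sum_(j < n) x j - x i + y.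
Proof.
rewrite (bigD1 i) //= [in RHS](bigD1 i) //= /deviate eqxx.
rewrite (eq_bigr (fun j => x j)); last by move=> j /negbTE ->.
by rewrite [x i + _]addrC addrK addrC.
Qed.

Lemma dev_self (R : realType) n (x : 'I_n -> R) i : deviate x i (x i) = x.
Proof. by apply/funext => j; rewrite /deviate; case: eqP => // ->. Qed.

Lemma xbar_dev (R : realType) n (x : 'I_n -> R) i y : (0 < n)%N ->
  xbar (deviate x i y) = xbar x + (y - x i) / n%:R.
Proof.
move=> n0; have N0 : n%:R != 0 :> R by rewrite pnatr_eq0 -lt0n.
by rewrite /xbar sum_dev; field.
Qed.

Lemma payoff_dev (R : realType) n (alpha : 'I_n -> R) m (x : 'I_n -> R) i y : (0 < n)%N ->
  xbar (deviate x i y) <= m ->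
  payoff alpha m (deviate x i y) i =
  ((n%:R - 1) / n%:R * y + (m - xbar x + x i / n%:R)) `^ alpha i * (1 - y) `^ (1 - alpha i).
Proof.
move=> n0 hm; have N0 : n%:R != 0 :> R by rewrite pnatr_eq0 -lt0n.
rewrite /payoff /grade {2 3}/deviate eqxx.
have -> : Num.max (m - xbar (deviate x i y)) 0 = m - xbar (deviate x i y).
  by apply/max_idPl; rewrite subr_ge0.
congr (_ `^ _ * _); by rewrite xbar_dev // {1}/deviate eqxx; field.
Qed.

Theorem mainTheorem8 (R : realType) (n : nat) (alpha : 'I_n -> R) (m : R)
  (x : 'I_n -> R) :
  (2 <= n)%N ->
  (forall i, 0 < alpha i < 1) ->
  0 < m < 1 ->
  pure_nash alpha m x ->
  xbar x < m ->
  (forall i, 0 < x i) ->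
  [/\ (exists i, alpha i <= alpha_hat alpha),
      (exists i, alpha_hat alpha <= alpha i),
      xbar x = 1 - (n%:R * m / (n%:R - 1)) * ((alpha_hat alpha)^-1 - 1)
    & forall i, x i = ((n%:R - 1) * alpha i - n%:R * (1 - alpha i) * (m - xbar x))
                      / (n%:R - alpha i)].
Proof.
move=> hn hal hm hnash hxb hpos.
have n0 : (0 < n)%N := leq_trans (isT : (1 <= 2)%N) hn.
have N0 : 0 < n%:R :> R by rewrite ltr0n.
have N1 : 1 < n%:R :> R by rewrite ltr1n.
have N0' : n%:R != 0 :> R by rewrite gt_eqF.
have D0 : 0 < m - xbar x by rewrite subr_gt0.
have Hx : forall i, x i = ((n%:R - 1) * alpha i - n%:R * (1 - alpha i) * (m - xbar x))
                      / (n%:R - alpha i).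
  move=> i; have [hxi hbest] := hnash i.
  have [al0 al1] := andP (hal i).
  have hxi0 := hpos i.
  have c0 : 0 <= x i / n%:R by rewrite divr_ge0 // ltW.
  have a0 : 0 < (n%:R - 1) / n%:R :> R by rewrite divr_gt0 // subr_gt0.
  have xi1 : x i < 1.
    rewrite lt_neqAle (andP hxi).2 andbT; apply/eqP => e.
    have h0 : 0 <= (0:R) <= 1 by rewrite lexx ler01.
    have := hbest 0 h0.
    rewrite -[X in _ <= payoff _ _ X _](@dev_self _ _ x i).
    rewrite payoff_dev //; last by rewrite xbar_dev // sub0r mulNr; lra.
    rewrite payoff_dev //; last by rewrite dev_self; lra.
    rewrite e subrr powR0; last by rewrite subr_eq0 eq_sym lt_eqF.
    rewrite mulr0 mulr0 add0r subr0 powR1 mulr1 => hle.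
    have : 0 < (m - xbar x + 1 / n%:R) `^ alpha i.
      apply: powR_gt0; have : 0 < 1 / n%:R :> R by rewrite divr_gt0.
      lra.
    lra.
  pose hi := Num.min 1 (x i + n%:R * (m - xbar x)).
  have hi1 : hi <= 1 by rewrite ge_min lexx.
  have hi2 : hi <= x i + n%:R * (m - xbar x) by rewrite ge_min lexx orbT.
  have xhi : x i < hi by rewrite lt_min xi1 /= ltrDl mulr_gt0.
  have F := @foc R (alpha i) ((n%:R - 1) / n%:R) (m - xbar x + x i / n%:R) 0 hi (x i)
    (hal i) _ _ _.
  have E : alpha i * ((n%:R - 1) / n%:R) * (1 - x i) =
           (1 - alpha i) * ((n%:R - 1) / n%:R * x i + (m - xbar x + x i / n%:R)).
    apply: F; first by rewrite hxi0 xhi.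
      move=> t /andP[t0 th]; split; last by lra.
      have : 0 < (n%:R - 1) / n%:R * t by rewrite mulr_gt0.
      lra.
    move=> t /andP[t0 th].
    have ht : 0 <= t <= 1 by apply/andP; split; lra.
    have := hbest t ht.
    rewrite -[X in _ <= payoff _ _ X _](@dev_self _ _ x i).
    rewrite payoff_dev //; last first.
      rewrite xbar_dev // -lerBrDl ler_pdivrMr //; lra.
    rewrite payoff_dev //; by rewrite dev_self; lra.
  have E2 : n%:R * (alpha i * ((n%:R - 1) / n%:R) * (1 - x i) -
           (1 - alpha i) * ((n%:R - 1) / n%:R * x i + (m - xbar x + x i / n%:R))) =
           ((n%:R - 1) * alpha i - n%:R * (1 - alpha i) * (m - xbar x)) - x i * (n%:R - alpha i).
    by field.
  rewrite E subrr mulr0 in E2.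
  have Na : n%:R - alpha i != 0 by rewrite gt_eqF // subr_gt0; lra.
  apply: (mulIf Na); rewrite divfK //; lra.
have Na i : n%:R - alpha i != 0.
  by have [a0 a1] := andP (hal i); rewrite gt_eqF // subr_gt0; lra.
have hgt i : n%:R^-1 < (n%:R - alpha i)^-1.
  have [a0 a1] := andP (hal i).
  rewrite -subr_gt0.
  have -> : (n%:R - alpha i)^-1 - n%:R^-1 = alpha i / (n%:R * (n%:R - alpha i)).
    by field; rewrite Na N0'.
  by rewrite divr_gt0 // mulr_gt0 // subr_gt0; lra.
have i0 : 'I_n := Ordinal n0.
have hasn : has (fun i : 'I_n => true) (index_enum 'I_n).
  by apply/hasP; exists i0; rewrite ?mem_index_enum.
set H := \sum_(i < n) (n%:R - alpha i)^-1.
have H1 : 1 < H.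
  have := @ltr_sum R _ (index_enum 'I_n) (fun _ => true) (fun _ => n%:R^-1)
     (fun i => (n%:R - alpha i)^-1) hasn (fun i _ => hgt i).
  by rewrite sumr_const card_ord -(mulr_natr (n%:R^-1)) mulVf.
have H0 : H != 0 by rewrite gt_eqF //; lra.
have H10 : H - 1 != 0 by rewrite gt_eqF // subr_gt0.
have N10 : n%:R - 1 != 0 :> R by rewrite gt_eqF // subr_gt0.
have sumHN : \sum_(i < n) (H / n%:R) = H.
  by rewrite sumr_const card_ord -(mulr_natr (H / n%:R)) divfK.
have key i : (n%:R - alpha i)^-1 - H / n%:R
    = H * (alpha i - alpha_hat alpha) / (n%:R * (n%:R - alpha i)).
  by rewrite /alpha_hat -/H; field; rewrite Na N0' H0.
split => //.
- have [//|nE] := pselect (exists i, alpha i <= alpha_hat alpha).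
  have hc i : H / n%:R < (n%:R - alpha i)^-1.
    have Hp : 0 < H by lra.
    have Nap : 0 < n%:R - alpha i by have [a0 a1] := andP (hal i); rewrite subr_gt0; lra.
    rewrite -subr_gt0 key divr_gt0 // ?mulr_gt0 // subr_gt0 ltNge; apply/negP => h; apply: nE; by exists i.
  have := @ltr_sum R _ (index_enum 'I_n) (fun _ => true) (fun _ => H / n%:R)
     (fun i => (n%:R - alpha i)^-1) hasn (fun i _ => hc i).
  by rewrite sumHN ltxx.
- have [//|nE] := pselect (exists i, alpha_hat alpha <= alpha i).
  have hc i : (n%:R - alpha i)^-1 < H / n%:R.
    have Hp : 0 < H by lra.
    have Nap : 0 < n%:R - alpha i by have [a0 a1] := andP (hal i); rewrite subr_gt0; lra.
    rewrite -subr_lt0 key pmulr_llt0 ?invr_gt0 ?mulr_gt0 // pmulr_rlt0 // subr_lt0 ltNge; apply/negP => h; apply: nE; by exists i.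
  have := @ltr_sum R _ (index_enum 'I_n) (fun _ => true)
     (fun i => (n%:R - alpha i)^-1) (fun _ => H / n%:R) hasn (fun i _ => hc i).
  by rewrite sumHN ltxx.
set X := xbar x.
set K := (n%:R - 1) * (1 + m) * H - (n%:R - 1) - n%:R * m.
have Sx : \sum_(i < n) x i = (n%:R - 1) * (n%:R * (1 + (m - X))) * H
                             - ((n%:R - 1) + n%:R * (m - X)) * n%:R.
  rewrite (eq_bigr (fun i => (n%:R - 1) * (n%:R * (1 + (m - X))) * (n%:R - alpha i)^-1
                              - ((n%:R - 1) + n%:R * (m - X)))); last first.
    move=> i _; rewrite {1}Hx -/X; field; exact: Na.
  by rewrite big_split /= -mulr_sumr -/H sumrN sumr_const card_ord -(mulr_natr (n%:R - 1 + n%:R * (m - X))).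
have XE : X * n%:R = \sum_(i < n) x i by rewrite /X /xbar divfK.
have I : n%:R * (K - X * (n%:R - 1) * (H - 1)) =
   ((n%:R - 1) * (n%:R * (1 + (m - X))) * H
                             - ((n%:R - 1) + n%:R * (m - X)) * n%:R) - X * n%:R.
  by rewrite /K; ring.
rewrite -Sx -XE subrr in I.
move/eqP: I; rewrite mulf_eq0 (negbTE N0') /= subr_eq0 => /eqP I.
have -> : 1 - n%:R * m / (n%:R - 1) * ((alpha_hat alpha)^-1 - 1)
   = K / ((n%:R - 1) * (H - 1)).
  by rewrite /alpha_hat -/H /K; field; rewrite H10 N10 H0 N0'.
by rewrite I -mulrA mulfK // mulf_neq0.
Qed.
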